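(* Let $(C^\bullet,d,d^* )$ be a $\mathbb{Z}_2$-graded bi-graded complex of finite-dimensional ${\bf k}$-vector spaces and suppose that the combinatorial Laplacian $\Delta=d^*d+dd^*$ has no zero eigenvalue. Then $H^\bullet(d)=0$ and $H_\bullet(d^* )=0$. Moreover, $d^*d$ maps $C_+^{\bar k}$ isomorphically onto itself for $k=0,1$, and (identifying $\operatorname{Det}(H^\bullet(d))\otimes\operatorname{Det}(H_\bullet(d^* ))^{-1}={\bf k}$) $$\tau(C^\bullet,d,d^* )=\operatorname{Det}\big(d^*d|_{C_+^{\bar 0}}\big)\cdot\operatorname{Det}\big(d^*d|_{C_+^{\bar 1}}\big)^{-1}.$$
   Context: ${\bf k}$ is a field of characteristic zero; bars on integers denote residues mod 2. A $\mathbb{Z}_2$-graded bi-graded complex $(C^\bullet,d,d^* )$ consists of finite-dimensional ${\bf k}$-vector spaces $C^{\bar 0},C^{\bar 1}$ and linear maps $d:C^{\bar k}\to C^{\overline{k+1}}$, $d^*:C^{\bar k}\to C^{\overline{k-1}}$ with $d^2=0$, $(d^* )^2=0$ ($d^*$ is not assumed to be an adjoint of $d$). $H^{\bar k}(d)$ is the cohomology of $(C^\bullet,d)$ and $H_{\bar k}(d^* )$ the homology of $(C^\bullet,d^* )$. For a finite-dimensional space $V$ of dimension $n$, $\operatorname{Det}(V)=\wedge^nV$ ($\operatorname{Det}(0)={\bf k}$), $\operatorname{Det}(V)^{-1}$ is its dual line; $\operatorname{Det}(C^\bullet)=\operatorname{Det}(C^{\bar0})\otimes\operatorname{Det}(C^{\bar1})^{-1}$,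 and similarly $\operatorname{Det}(H^\bullet(d))$, $\operatorname{Det}(H_\bullet(d^* ))$. For spaces $V_1,\dots,V_r$, $\mu_{V_1,\dots,V_r}:\operatorname{Det}V_1\otimes\cdots\otimes\operatorname{Det}V_r\to\operatorname{Det}(V_1\oplus\cdots\oplus V_r)$ is the fusion isomorphism $v_1\otimes\cdots\otimes v_r\mapsto v_1\wedge\cdots\wedge v_r$. Torsion: for $k=0,1$ choose decompositions $C^{\bar k}=B^{\bar k}\oplus H^{\bar k}\oplus A^{\bar k}$ with $B^{\bar k}\oplus H^{\bar k}=\operatorname{Ker}d\cap C^{\bar k}$, $B^{\bar k}=d(C^{\overline{k-1}})=d(A^{\overline{k-1}})$, and $C^{\bar k}=B_{\bar k}\oplus H_{\bar k}\oplus A_{\bar k}$ with $B_{\bar k}\oplus H_{\bar k}=\operatorname{Ker}d^*\cap C^{\bar k}$, $B_{\bar k}=d^*(C^{\overline{k+1}})=d^*(A_{\overline{k+1}})$. Given nonzero $c_{\bar k}\in\operatorname{Det}C^{\bar k}$, $x_{\bar k}\in\operatorname{Det}A^{\bar k}$, $y_{\bar k}\in\operatorname{Det}A_{\bar k}$, let $h_{\bar k}\in\operatorname{Det}H^{\bar k}$, $h'_{\bar k}\in\operatorname{Det}H_{\bar k}$ be the unique elements with $c_{\bar k}=\mu_{B^{\bar k},H^{\bar k},A^{\bar k}}(d(x_{\overline{k-1}})\otimes h_{\bar k}\otimes x_{\bar k})$ and $c_{\bar k}=\mu_{B_{\bar k},H_{\bar k},A_{\bar k}}(d^*(y_{\overline{k+1}})\otimes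 h'_{\bar k}\otimes y_{\bar k})$ (here $d(x)$, $d^*(y)$ are images under the maps induced by the isomorphisms $d:A^{\bar k}\to B^{\overline{k+1}}$, $d^*:A_{\bar k}\to B_{\overline{k-1}}$). Set $\phi(c)=h_{\bar0}\otimes h_{\bar1}^{-1}\in\operatorname{Det}H^\bullet(d)$ and $\phi'(c)=h'_{\bar0}\otimes h'^{-1}_{\bar1}\in\operatorname{Det}H_\bullet(d^* )$ for $c=c_{\bar0}\otimes c_{\bar1}^{-1}$ (identifying $H^{\bar k}\cong H^{\bar k}(d)$, $H_{\bar k}\cong H_{\bar k}(d^* )$). The Cappell–Miller torsion is $\tau(C^\bullet,d,d^* )=(-1)^{S(C^\bullet)}\phi(c)\,(\phi'(c))^{-1}\in\operatorname{Det}(H^\bullet(d))\otimes\operatorname{Det}(H_\bullet(d^* ))^{-1}$, where $S(C^\bullet)=\sum_{k=0,1}[\dim B_{\overline{k-1}}\dim B^{\overline{k+1}}+\dim B^{\overline{k+1}}\dim H_{\bar k}+\dim B_{\overline{k-1}}\dim H^{\bar k}]$. $C_+^{\bar k}:=\operatorname{Ker}d^*\cap C^{\bar k}$, $C_-^{\bar k}:=\operatorname{Ker}d\cap C^{\bar k}$. *)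

(* Defs.v *)
From HB Require Import structures.
From mathcomp Require Import all_boot all_order all_algebra.
Set Implicit Arguments. Unset Strict Implicit. Unset Printing Implicit Defensive.
Import GRing.Theory.
Local Open Scope ring_scope.

(* Model: C^{0} = F^n0, C^{1} = F^n1 (row vectors); a linear map
   C^{i} -> C^{j} is a matrix 'M_(ni, nj) acting on the right (v |-> v *m A).
   d0 : C^0 -> C^1, d1 : C^1 -> C^0   (the differential d),
   s0 : C^0 -> C^1, s1 : C^1 -> C^0   (the differential dstar, of degree -1 = +1 mod 2).
   A subspace is represented by a matrix whose row space is that subspace;
   a nonzero element of Det V is represented by a basis of V (its wedge). *)

(* Determinant of a matrix that is square (m = n); 0 otherwise. *)
Definition sqdet (F : fieldType) (m n : nat) (M : 'M[F]_(m, n)) : F :=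
  \det (conform_mx (0 : 'M[F]_n) M).

Definition laplacian (F : fieldType) (n0 n1 : nat)
  (d0 : 'M[F]_(n0, n1)) (d1 : 'M[F]_(n1, n0))
  (s0 : 'M[F]_(n0, n1)) (s1 : 'M[F]_(n1, n0)) : 'M[F]_(n0 + n1) :=
  block_mx (d0 *m s1 + s0 *m d1) 0 0 (d1 *m s0 + s1 *m d0).

Definition restr_iso (F : fieldType) (n : nat) (A S : 'M[F]_n) : Prop :=
  (S *m A == S)%MS /\
  (forall v : 'rV[F]_n, (v <= S)%MS -> v *m A = 0 -> v = 0).

Definition restr_det (F : fieldType) (n : nat) (A S : 'M[F]_n) : F :=
  \det (row_base S *m A *m pinvmx (row_base S)).

(* Admissible decomposition C^k = B^k (+) H^k (+) A^k for a differential with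
   incoming map dprev : C^{k-1} -> C^k and outgoing map dk : C^k -> C^{k+1}:
   Xprev = basis of A^{k-1}, Hk = basis of H^k, Xk = basis of A^k;
   B^k = dprev(A^{k-1}) = dprev(C^{k-1}),  B^k (+) H^k = Ker dk, and the
   rows of [dprev(Xprev); Hk; Xk] form a basis of C^k. *)
Definition dec_ok (F : fieldType) (p n q b h a : nat)
  (dprev : 'M[F]_(p, n)) (dk : 'M[F]_(n, q))
  (Xprev : 'M[F]_(b, p)) (Hk : 'M[F]_(h, n)) (Xk : 'M[F]_(a, n)) : bool :=
  [&& (Xprev *m dprev == dprev)%MS,
      (col_mx (Xprev *m dprev) Hk == kermx dk)%MS,
      row_free (col_mx (col_mx (Xprev *m dprev) Hk) Xk) &
      row_full (col_mx (col_mx (Xprev *m dprev) Hk) Xk)].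

(* Coefficient eta with  c = mu(d(x) (x) (eta * omega_H) (x) x'),
   where omega_H is the wedge of the chosen basis Hk of H^k. *)
Definition eta (F : fieldType) (n b h a : nat) (c : 'M[F]_n)
  (Bm : 'M[F]_(b, n)) (Hk : 'M[F]_(h, n)) (Xk : 'M[F]_(a, n)) : F :=
  \det c / sqdet (col_mx (col_mx Bm Hk) Xk).

Definition CM_sign (F : fieldType) (n0 n1 : nat)
  (d0 : 'M[F]_(n0, n1)) (d1 : 'M[F]_(n1, n0))
  (s0 : 'M[F]_(n0, n1)) (s1 : 'M[F]_(n1, n0)) : nat :=
  let dimHu0 := (\rank (kermx d0) - \rank d1)%N in
  let dimHu1 := (\rank (kermx d1) - \rank d0)%N in
  let dimHl0 := (\rank (kermx s0) - \rank s1)%N in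
  let dimHl1 := (\rank (kermx s1) - \rank s0)%N in
  (\rank s0 * \rank d0 + \rank d0 * dimHl0 + \rank s0 * dimHu0
   + (\rank s1 * \rank d1 + \rank d1 * dimHl1 + \rank s1 * dimHu1))%N.

(* Coordinate of tau(C,d,dstar) w.r.t. the generator
   (w0 (x) w1^{-1}) (x) (w'0 (x) w'1^{-1})^{-1} of
   Det(H(d)) (x) Det(H(dstar))^{-1} determined by the chosen bases H0,H1 of
   H^0,H^1 and H'0,H'1 of H_0,H_1 (when these are all empty, the generator
   is 1 in k and the coordinate is tau itself). *)
Definition CM_torsion_coord (F : fieldType) (n0 n1 : nat)
  (d0 : 'M[F]_(n0, n1)) (d1 : 'M[F]_(n1, n0))
  (s0 : 'M[F]_(n0, n1)) (s1 : 'M[F]_(n1, n0))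
  (a0 a1 h0 h1 a0' a1' h0' h1' : nat)
  (c0 : 'M[F]_n0) (c1 : 'M[F]_n1)
  (X0 : 'M[F]_(a0, n0)) (X1 : 'M[F]_(a1, n1))
  (H0 : 'M[F]_(h0, n0)) (H1 : 'M[F]_(h1, n1))
  (Y0 : 'M[F]_(a0', n0)) (Y1 : 'M[F]_(a1', n1))
  (H'0 : 'M[F]_(h0', n0)) (H'1 : 'M[F]_(h1', n1)) : F :=
  let e0 := eta c0 (X1 *m d1) H0 X0 in
  let e1 := eta c1 (X0 *m d0) H1 X1 in
  let e'0 := eta c0 (Y1 *m s1) H'0 Y0 in
  let e'1 := eta c1 (Y0 *m s0) H'1 Y1 in
  (-1) ^+ CM_sign d0 d1 s0 s1 * ((e0 / e1) / (e'0 / e'1)).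

(* "tau(C,d,dstar) has coordinate t": for every admissible choice of
   decompositions and of nonzero elements c_k (bases c0,c1 of C^0,C^1),
   x_k (bases X of A^k), y_k (bases Y of A_k), the resulting coordinate is t. *)
Definition CM_torsion_is (F : fieldType) (n0 n1 : nat)
  (d0 : 'M[F]_(n0, n1)) (d1 : 'M[F]_(n1, n0))
  (s0 : 'M[F]_(n0, n1)) (s1 : 'M[F]_(n1, n0)) (t : F) : Prop :=
  forall (a0 a1 h0 h1 a0' a1' h0' h1' : nat)
    (c0 : 'M[F]_n0) (c1 : 'M[F]_n1)
    (X0 : 'M[F]_(a0, n0)) (X1 : 'M[F]_(a1, n1))
    (H0 : 'M[F]_(h0, n0)) (H1 : 'M[F]_(h1, n1))
    (Y0 : 'M[F]_(a0', n0)) (Y1 : 'M[F]_(a1', n1))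
    (H'0 : 'M[F]_(h0', n0)) (H'1 : 'M[F]_(h1', n1)),
    c0 \in unitmx -> c1 \in unitmx ->
    dec_ok d1 d0 X1 H0 X0 -> dec_ok d0 d1 X0 H1 X1 ->
    dec_ok s1 s0 Y1 H'0 Y0 -> dec_ok s0 s1 Y0 H'1 Y1 ->
    CM_torsion_coord d0 d1 s0 s1 c0 c1 X0 X1 H0 H1 Y0 Y1 H'0 H'1 = t.

(* Main.v *)
Require Import Defs.
From HB Require Import structures.
From mathcomp Require Import all_boot all_order all_algebra.
From Stdlib Require Import Ring Field.
Set Implicit Arguments. Unset Strict Implicit. Unset Printing Implicit Defensive.
Import GRing.Theory.
Local Open Scope ring_scope.

Section FieldTac.
Variable K : fieldType.
Lemma K_ring_theory : @ring_theory (GRing.PzSemiRing.sort K) 0 1 +%R *%R (fun x y => x - y) -%R eq.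
Proof.
constructor => //; [exact: add0r|exact: addrC|exact: addrA|exact: mul1r|exact: mulrC
 |exact: mulrA|exact: mulrDl|exact: subrr].
Qed.
Lemma K_field_theory :
  @field_theory (GRing.PzSemiRing.sort K) 0 1 +%R *%R (fun x y => x - y) -%R (fun x y => x / y) GRing.inv eq.
Proof.
constructor => //; first exact: K_ring_theory.
- by apply/eqP; exact: oner_neq0.
- by move=> p /eqP; exact: mulVf.
Qed.
Add Field Kfield : K_field_theory.
Local Notation KS := (GRing.PzSemiRing.sort K).


Lemma alg_lemma (c0 c1 x0 x1 y0 y1 ph ps r r' l l' g0 g1 j : K) :
  c0 != 0 -> c1 != 0 -> x0 != 0 -> x1 != 0 -> y0 != 0 -> y1 != 0 ->
  ph != 0 -> ps != 0 ->
  x0 * ph = r' * (j * g1) -> y0 * ph = r * g1 -> x1 * ps = l * g0 ->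
  y1 * ps = l' * (j * g0) -> j * j = 1 ->
  @eq K ((c0 / x0 / (c1 / x1)) / (c0 / y0 / (c1 / y1))) ((r * l) / (l' * r')).
Proof.
move=> /eqP c0n /eqP c1n /eqP x0n /eqP x1n /eqP y0n /eqP y1n /eqP phn /eqP psn
  e1 e2 e3 e4 ej.
have g1n : g1 <> 0.
  move=> g; apply: y0n; apply/eqP; move: e2; rewrite g mulr0 => /eqP.
  by rewrite mulf_eq0 (negbTE (introN eqP phn)) orbF.
have g0n : g0 <> 0.
  move=> g; apply: x1n; apply/eqP; move: e3; rewrite g mulr0 => /eqP.
  by rewrite mulf_eq0 (negbTE (introN eqP psn)) orbF.
have jn : j <> 0 by move=> g; move: ej; rewrite g mulr0 => /eqP; rewrite eq_sym oner_eq0.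
have -> : @eq KS r (y0 * ph / g1) by rewrite e2 mulfK //; apply/eqP.
have -> : @eq KS l (x1 * ps / g0) by rewrite e3 mulfK //; apply/eqP.
have -> : @eq KS r' (x0 * ph / (j * g1)) by rewrite e1 mulfK // mulf_neq0 //; apply/eqP.
have -> : @eq KS l' (y1 * ps / (j * g0)) by rewrite e4 mulfK // mulf_neq0 //; apply/eqP.
have fin : forall a b : K, @eq KS (a * (j*j)) b -> a = b by move=> a b <-; rewrite ej mulr1.
apply: fin; field.
repeat split => //.
Qed.

End FieldTac.

Section Aux.
Variable F : fieldType.

Lemma sqdet_sq n (M : 'M[F]_n) : sqdet M = \det M.
Proof. by rewrite /sqdet conform_mx_id. Qed.

Lemma sqdet_mul m p n (A : 'M[F]_(m,p)) (B : 'M[F]_(p,n)) :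
  m = p -> p = n -> sqdet (A *m B) = sqdet A * sqdet B.
Proof. by move=> e1 e2; subst m n; rewrite !sqdet_sq det_mulmx. Qed.

Lemma sqdet_lblock m1 n1 m2 (A : 'M[F]_(m1,n1)) (C : 'M[F]_(m2,n1)) :
  m1 = n1 -> sqdet (block_mx A 0 C (1%:M : 'M[F]_m2)) = sqdet A.
Proof. by move=> e; subst m1; rewrite !sqdet_sq det_lblock det1 mulr1. Qed.

Lemma sqdet_cast m m' n n' (e1 : m = m') (e2 : n = n') (M : 'M[F]_(m,n)) :
  sqdet (castmx (e1, e2) M) = sqdet M.
Proof. by case: m' / e1; case: n' / e2; rewrite castmx_id. Qed.

Lemma sqdet_tr m n (M : 'M[F]_(m,n)) : m = n -> sqdet M^T = sqdet M.
Proof. by move=> e; subst m; rewrite !sqdet_sq det_tr. Qed.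

Lemma sqdet_unit m n (M : 'M[F]_(m,n)) : row_free M -> row_full M -> sqdet M != 0.
Proof.
move=> fr fu; have e : m = n by rewrite -(eqP fr) (eqP fu).
by subst m; rewrite sqdet_sq -unitfE -unitmxE -row_free_unit.
Qed.

Definition Jmx p q : 'M[F]_(q + p, p + q) := block_mx 0 1%:M 1%:M 0.

Lemma Jmx_col p q n (A : 'M[F]_(p,n)) (B : 'M[F]_(q,n)) :
  col_mx B A = Jmx p q *m col_mx A B.
Proof. by rewrite /Jmx mul_block_col !mul0mx !mul1mx addr0 add0r. Qed.

Lemma Jmx_sq p q : sqdet (Jmx p q) * sqdet (Jmx p q) = 1.
Proof.
have e : sqdet (Jmx p q) = sqdet (Jmx q p).
  rewrite -sqdet_tr; last exact: addnC.
  by rewrite /Jmx tr_block_mx !trmx0 !tr_scalar_mx.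
rewrite {2}e.
rewrite -sqdet_mul; last 2 [exact: addnC].
rewrite /Jmx mulmx_block !mul0mx !mulmx0 !mul1mx !add0r !addr0 -scalar_mx_block.
rewrite sqdet_sq det1 //. all: exact: addnC.
Qed.

Lemma row_free_colL m1 m2 n (A : 'M[F]_(m1,n)) (B : 'M[F]_(m2,n)) :
  row_free (col_mx A B) -> row_free A /\ row_free B.
Proof.
rewrite /row_free -addsmxE => /eqP e.
have h := mxrank_adds_leqif A B; rewrite e in h.
have hA := rank_leq_row A; have hB := rank_leq_row B.
have h1 := leq_trans h.1 (leq_add hA (leqnn _)).
have h2 := leq_trans h.1 (leq_add (leqnn _) hB).
rewrite leq_add2l in h1; rewrite leq_add2r in h2.
by rewrite !eqn_leq hA hB h1 h2.
Qed.

Lemma col_mx_empty m n a (A : 'M[F]_(m,n)) (H : 'M[F]_(0,n)) (X : 'M[F]_(a,n)) :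
  col_mx A X = castmx (esym (addnA m 0 a), erefl n) (col_mx (col_mx A H) X).
Proof.
rewrite -col_mxA; congr col_mx.
apply/matrixP => i j; rewrite mxE; case: splitP => [[]//|k /= ek].
by congr (X _ _); apply: val_inj.
Qed.


Lemma eta0 n b a (c : 'M[F]_n) (Bm : 'M[F]_(b,n)) (H : 'M[F]_(0,n)) (X : 'M[F]_(a,n)) :
  Defs.eta c Bm H X = \det c / sqdet (col_mx Bm X).
Proof. by rewrite /Defs.eta (col_mx_empty Bm H X) sqdet_cast. Qed.

Lemma dec_h0 p n q b h a (dp : 'M[F]_(p,n)) (dk : 'M[F]_(n,q)) (Xp : 'M[F]_(b,p))
  (Hk : 'M[F]_(h,n)) (Xk : 'M[F]_(a,n)) :
  dec_ok dp dk Xp Hk Xk -> (kermx dk == dp)%MS -> h = 0%N.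
Proof.
case/and4P => e1 e2 fr fu ek.
have [frT _] := row_free_colL fr.
have r : (b + h <= b)%N.
  rewrite -(eqP frT) (eqmx_rank e2) (eqmx_rank ek) -(eqmx_rank e1); exact: rank_leq_row.
by apply/eqP; rewrite -leqn0 -(leq_add2l b) addn0.
Qed.

Lemma dec0 p n q b a (dp : 'M[F]_(p,n)) (dk : 'M[F]_(n,q)) (Xp : 'M[F]_(b,p))
  (Hk : 'M[F]_(0,n)) (Xk : 'M[F]_(a,n)) :
  dec_ok dp dk Xp Hk Xk -> (kermx dk == dp)%MS ->
  [/\ row_free (col_mx (Xp *m dp) Xk), row_full (col_mx (Xp *m dp) Xk),
      (Xp *m dp == dp)%MS, b = \rank dp & a = \rank dk].
Proof.
case/and4P => e1 e2 fr fu ek.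
have fr' : row_free (col_mx (Xp *m dp) Xk) by rewrite (col_mx_empty _ Hk) row_free_castmx.
have fu' : row_full (col_mx (Xp *m dp) Xk) by rewrite (col_mx_empty _ Hk) row_full_castmx.
have [fb _] := row_free_colL fr'.
have rb : b = \rank dp by rewrite -(eqmx_rank e1) (eqP fb).
split => //.
have h1 : (b + a)%N = n by rewrite -(eqP fr') (eqP fu').
have h2 : \rank dp = (n - \rank dk)%N by rewrite -mxrank_ker (eqmx_rank ek).
by rewrite -[a](addKn b) h1 rb h2 subKn // rank_leq_row.
Qed.

Lemma restr_det_basis n k (A S : 'M[F]_n) (B : 'M[F]_(k,n)) (M : 'M[F]_k) :
  row_free B -> (B == S)%MS -> B *m A = M *m B -> restr_det A S = \det M.
Proof.
move=> fB eBS eA.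
set Rb := row_base S.
have eRB : (Rb :=: B)%MS := eqmx_trans (eq_row_base S) (eqmx_sym (eqmxP eBS)).
have rk : \rank S = k by rewrite -(eqmx_rank eBS) (eqP fB).
set P := Rb *m pinvmx B.
have hP : P *m B = Rb by rewrite mulmxKpV // eRB.
set Q := B *m pinvmx Rb.
have hQ : Q *m Rb = B by rewrite mulmxKpV // eRB.
set Kd := Rb *m A *m pinvmx Rb.
have hK : Kd *m Rb = Rb *m A.
  rewrite mulmxKpV // -{1}hP -mulmxA eA mulmxA.
  by apply: (submx_trans (submxMl _ _)); rewrite eRB.
have QP : Q *m P = 1%:M.
  by apply: (row_free_inj fB); rewrite /= -mulmxA hP hQ mul1mx.
have KP : Kd *m P = P *m M.
  by apply: (row_free_inj fB); rewrite /= -mulmxA hP hK -{1}hP -mulmxA eA mulmxA.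
rewrite /restr_det -/Rb -/Kd -!sqdet_sq.
have nP : sqdet P != 0.
  apply/eqP => h; have := congr1 (@sqdet F k k) QP.
  rewrite sqdet_mul ?rk // h mulr0 sqdet_sq det1 => /eqP; by rewrite eq_sym oner_eq0.
by apply: (mulIf nP); rewrite -sqdet_mul ?rk // KP sqdet_mul ?rk // mulrC.
Qed.

End Aux.

Lemma comm_inv (F : fieldType) n m (A : 'M[F]_n) (B : 'M[F]_m) (X : 'M[F]_(n,m)) :
  A \in unitmx -> B \in unitmx -> A *m X = X *m B -> invmx A *m X = X *m invmx B.
Proof.
move=> uA uB e.
by rewrite -[LHS]mulmx1 -(mulmxV uB) mulmxA -(mulmxA _ X B) -e mulKmx.
Qed.

Section Deg.
Variables (F : fieldType) (n0 n1 : nat).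
Variables (d0 : 'M[F]_(n0, n1)) (d1 : 'M[F]_(n1, n0)).
Variables (s0 : 'M[F]_(n0, n1)) (s1 : 'M[F]_(n1, n0)).
Hypotheses (dd01 : d0 *m d1 = 0) (dd10 : d1 *m d0 = 0).
Hypotheses (ss01 : s0 *m s1 = 0) (ss10 : s1 *m s0 = 0).
Hypothesis u0 : (d0 *m s1 + s0 *m d1) \in unitmx.
Hypothesis u1 : (d1 *m s0 + s1 *m d0) \in unitmx.

Let D0 := d0 *m s1 + s0 *m d1.
Let D1 := d1 *m s0 + s1 *m d0.

Let cD1d1 : D1 *m d1 = d1 *m D0.
Proof.
rewrite /D0 /D1 mulmxDl mulmxDr -!mulmxA dd01 mulmx0 addr0 !mulmxA dd10 mul0mx add0r.
by [].
Qed.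

Let cD0s0 : D0 *m s0 = s0 *m D1.
Proof.
rewrite /D0 /D1 mulmxDl mulmxDr -!mulmxA ss10 mulmx0 add0r !mulmxA ss01 mul0mx addr0.
by [].
Qed.

Lemma ker_d : (kermx d0 == d1)%MS.
Proof.
apply/andP; split; last by rewrite sub_kermx dd10.
set K := kermx d0.
have h : K *m d0 = 0 by apply/sub_kermxP.
have -> : K = (K *m s0 *m invmx D1) *m d1.
  rewrite -mulmxA (comm_inv u1 u0 cD1d1) !mulmxA.
  rewrite -{1}[K](mulmxK u0) /D0 mulmxDr !mulmxA h mul0mx add0r.
  by [].
exact: submxMl.
Qed.

Lemma iso_d : restr_iso (d0 *m s1) (kermx s0).
Proof.
set K := kermx s0.
have h : K *m s0 = 0 by apply/sub_kermxP.
split.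
  apply/andP; split.
    by rewrite sub_kermx -!mulmxA ss10 !mulmx0.
  have e : K = K *m invmx D0 *m (d0 *m s1).
    rewrite -{1}[K](mulmxKV u0) /D0 mulmxDr.
    rewrite [X in _ + X]mulmxA -(mulmxA K (invmx D0) s0) (comm_inv u0 u1 cD0s0) mulmxA h !mul0mx addr0.
    by [].
  rewrite {1}e submxMr // sub_kermx -mulmxA (comm_inv u0 u1 cD0s0) mulmxA h mul0mx.
  by [].
move=> v vK vA.
have hv : v *m s0 = 0 by apply/sub_kermxP; apply: submx_trans vK _.
by rewrite -[v](mulmxK u0) /D0 mulmxDr !mulmxA -(mulmxA v d0) vA hv !mul0mx addr0 mul0mx.
Qed.

Lemma rank_sum : (\rank s1 + \rank d1)%N = n0.
Proof.
have := mxrank_sum_cap s1 d1.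
have -> : \rank (s1 + d1)%MS = n0.
  apply/eqP; rewrite eqn_leq rank_leq_col /= -{1}(mxrank1 F n0) mxrankS //.
  by rewrite -(mulVmx u0) /D0 mulmxDr !mulmxA addmx_sub_adds // submxMl.
have -> : \rank (s1 :&: d1)%MS = 0%N.
  apply/eqP; rewrite mxrank_eq0; apply/eqP.
  set C := (s1 :&: d1)%MS.
  have hs : C *m s0 = 0.
    by rewrite /C; have [W ->] := submxP (capmxSl s1 d1); rewrite -mulmxA ss10 mulmx0.
  have hd : C *m d0 = 0.
    by rewrite /C; have [W ->] := submxP (capmxSr s1 d1); rewrite -mulmxA dd10 mulmx0.
  by rewrite -[C](mulmxK u0) /D0 mulmxDr !mulmxA hs hd !mul0mx addr0 mul0mx.
by rewrite addn0.
Qed.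

Lemma phi_free : row_free (d0 + s0).
Proof.
apply: inj_row_free => v h.
have h1 : v *m d0 *m s1 = 0.
  move/(congr1 (mulmx^~ s1)): h; rewrite /= mul0mx mulmxDr mulmxDl.
  by rewrite -(mulmxA v s0) ss01 mulmx0 addr0.
have h2 : v *m s0 *m d1 = 0.
  move/(congr1 (mulmx^~ d1)): h; rewrite /= mul0mx mulmxDr mulmxDl.
  by rewrite -(mulmxA v d0) dd01 mulmx0 add0r.
by rewrite -[v](mulmxK u0) /D0 mulmxDr !mulmxA h1 h2 addr0 mul0mx.
Qed.

End Deg.

Lemma subMeq (F : fieldType) m p q r (W : 'M[F]_(q,r)) (d : 'M[F]_(p,r)) (Z : 'M[F]_(m,p)) :
  (W == d)%MS -> (Z *m d <= W)%MS.
Proof. by move=> /eqmxP ->; exact: submxMl. Qed.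

Lemma KpV_mul (F : fieldType) m k n p (P : 'M[F]_(k,n)) (U : 'M[F]_(m,n)) (C : 'M[F]_(n,p)) :
  (U <= P)%MS -> U *m pinvmx P *m (P *m C) = U *m C.
Proof. by move=> h; rewrite mulmxA mulmxKpV. Qed.

Lemma detfac (F : fieldType) m1 m2 k n p (Z : 'M[F]_(m1 + m2, p)) (Phi : 'M[F]_(p, n))
  (U : 'M[F]_(m1,n)) (W Q : 'M[F]_(m2,n)) (P : 'M[F]_(k,n)) :
  Z *m Phi = col_mx U (W + Q) -> (U <= P)%MS -> (W <= P)%MS -> m1 = k ->
  (m1 + m2)%N = p -> p = n ->
  sqdet Z * sqdet Phi = sqdet (U *m pinvmx P) * sqdet (col_mx P Q).
Proof.
move=> e sU sW e1 e2 e3.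
have e' : Z *m Phi =
   block_mx (U *m pinvmx P) 0 (W *m pinvmx P) 1%:M *m col_mx P Q.
  by rewrite e mul_block_col mul0mx addr0 mul1mx !mulmxKpV.
rewrite -sqdet_mul // e' sqdet_mul ?sqdet_lblock //; first by rewrite e1.
by rewrite -e3 -e2 e1.
Qed.

Lemma Jdet (F : fieldType) p q n (A : 'M[F]_(p,n)) (B : 'M[F]_(q,n)) :
  (p + q)%N = n -> sqdet (col_mx B A) = sqdet (Jmx F p q) * sqdet (col_mx A B).
Proof. by move=> e; rewrite Jmx_col sqdet_mul // addnC. Qed.

Theorem proposition2p1 (F : fieldType) (charF0 : [pchar F] =i pred0)
  (n0 n1 : nat)
  (d0 : 'M[F]_(n0, n1)) (d1 : 'M[F]_(n1, n0))
  (s0 : 'M[F]_(n0, n1)) (s1 : 'M[F]_(n1, n0)) :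
  d0 *m d1 = 0 -> d1 *m d0 = 0 -> s0 *m s1 = 0 -> s1 *m s0 = 0 ->
  ~~ eigenvalue (laplacian d0 d1 s0 s1) 0 ->
  [/\ (* H^.(d) = 0 *) (kermx d0 == d1)%MS /\ (kermx d1 == d0)%MS,
      (* H_.(dstar) = 0 *) (kermx s0 == s1)%MS /\ (kermx s1 == s0)%MS,
      (* dstard maps C_+^k isomorphically onto itself *)
      restr_iso (d0 *m s1) (kermx s0) /\ restr_iso (d1 *m s0) (kermx s1) &
      CM_torsion_is d0 d1 s0 s1
        (restr_det (d0 *m s1) (kermx s0) / restr_det (d1 *m s0) (kermx s1))].
Proof.
move=> dd01 dd10 ss01 ss10 nev.
have uL : laplacian d0 d1 s0 s1 \in unitmx.
  rewrite -row_free_unit -kermx_eq0.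
  by move: nev; rewrite /eigenvalue /eigenspace raddf0 subr0 negbK.
have [uD0 uD1] : (d0 *m s1 + s0 *m d1) \in unitmx /\ (d1 *m s0 + s1 *m d0) \in unitmx.
  by move: uL; rewrite unitmxE /laplacian det_ublock unitrM -!unitmxE => /andP.
have uD0' : (s0 *m d1 + d0 *m s1) \in unitmx by rewrite addrC.
have uD1' : (s1 *m d0 + d1 *m s0) \in unitmx by rewrite addrC.
have kd0 := ker_d dd01 dd10 uD0 uD1.
have kd1 := ker_d dd10 dd01 uD1 uD0.
have ks0 := ker_d ss01 ss10 uD0' uD1'.
have ks1 := ker_d ss10 ss01 uD1' uD0'.
have is0 := iso_d ss01 ss10 uD0 uD1.
have is1 := iso_d ss10 ss01 uD1 uD0.
have rs0 := rank_sum dd10 ss10 uD0.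
have rs1 := rank_sum dd01 ss01 uD1.
have fPhi := phi_free dd01 ss01 uD0.
have fPsi := phi_free dd10 ss10 uD1.
split => //.
have rkd0 : (\rank d0 + \rank d1)%N = n0.
  by rewrite -(eqmx_rank kd0) mxrank_ker subnKC // rank_leq_row.
have rkd1 : (\rank d1 + \rank d0)%N = n1.
  by rewrite -(eqmx_rank kd1) mxrank_ker subnKC // rank_leq_row.
have rks1 : \rank s1 = \rank d0 by apply/eqP; rewrite -(eqn_add2r (\rank d1)) rs0 rkd0.
have rks0 : \rank s0 = \rank d1 by apply/eqP; rewrite -(eqn_add2r (\rank d0)) rs1 rkd1.
have sgn : (-1) ^+ CM_sign d0 d1 s0 s1 = 1 :> F.
  rewrite /CM_sign (eqmx_rank kd0) (eqmx_rank kd1) (eqmx_rank ks0) (eqmx_rank ks1) !subnn.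
  by rewrite !muln0 !addn0 rks0 rks1 mulnC addnn -mul2n exprM sqrrN !expr1n.
move=> a0 a1 h0 h1 a0' a1' h0' h1' c0 c1 X0 X1 H0 H1 Y0 Y1 H'0 H'1 uc0 uc1 dA0 dA1 dB0 dB1.
have e := dec_h0 dA0 kd0; subst h0.
have e := dec_h0 dA1 kd1; subst h1.
have e := dec_h0 dB0 ks0; subst h0'.
have e := dec_h0 dB1 ks1; subst h1'.
have [fE0 uE0 eX1 ra1 ra0] := dec0 dA0 kd0.
have [fE1 uE1 eX0 _ _] := dec0 dA1 kd1.
have [fF0 uF0 eY1 ra1' ra0'] := dec0 dB0 ks0.
have [fF1 uF1 eY0 _ _] := dec0 dB1 ks1.
have ea1' : a1' = a0 by rewrite ra1' ra0 rks1.
have ea0' : a0' = a1 by rewrite ra0' ra1 rks0.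
clear ra1' ra0'; subst a1' a0'.
have hn0 : (a1 + a0)%N = n0 by rewrite ra1 ra0 addnC rkd0.
have hn1 : (a0 + a1)%N = n1 by rewrite ra1 ra0 addnC rkd1.
subst n0 n1.
rewrite /CM_torsion_coord; cbv zeta; rewrite sgn mul1r !eta0.
have sX0 : forall m (Z : 'M_(m, _)), (Z *m d0 <= X0 *m d0)%MS := fun m Z => subMeq Z eX0.
have sX1 : forall m (Z : 'M_(m, _)), (Z *m d1 <= X1 *m d1)%MS := fun m Z => subMeq Z eX1.
have sY0 : forall m (Z : 'M_(m, _)), (Z *m s0 <= Y0 *m s0)%MS := fun m Z => subMeq Z eY0.
have sY1 : forall m (Z : 'M_(m, _)), (Z *m s1 <= Y1 *m s1)%MS := fun m Z => subMeq Z eY1.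
have [fY1s1 _] := row_free_colL fF0.
have [fY0s0 _] := row_free_colL fF1.
have rM : restr_det (d0 *m s1) (kermx s0) =
    \det ((Y1 *m s1 *m d0 *m pinvmx (X0 *m d0)) *m (X0 *m d0 *m s1 *m pinvmx (Y1 *m s1))).
  apply: restr_det_basis fY1s1 _ _.
    by apply/eqmxP; exact: eqmx_trans (eqmxP eY1) (eqmx_sym (eqmxP ks0)).
  rewrite -(mulmxA (Y1 *m s1 *m d0 *m pinvmx (X0 *m d0))) mulmxKpV ?sY1 //.
  by rewrite KpV_mul ?sX0 // mulmxA.
have rN : restr_det (d1 *m s0) (kermx s1) =
    \det ((Y0 *m s0 *m d1 *m pinvmx (X1 *m d1)) *m (X1 *m d1 *m s0 *m pinvmx (Y0 *m s0))).
  apply: restr_det_basis fY0s0 _ _.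
    by apply/eqmxP; exact: eqmx_trans (eqmxP eY0) (eqmx_sym (eqmxP ks1)).
  rewrite -(mulmxA (Y0 *m s0 *m d1 *m pinvmx (X1 *m d1))) mulmxKpV ?sY0 //.
  by rewrite KpV_mul ?sX1 // mulmxA.
rewrite rM rN !det_mulmx.
apply: (alg_lemma (j := sqdet (Jmx F a0 a1))
  (g0 := sqdet (col_mx (Y1 *m s1) (X1 *m d1))) (g1 := sqdet (col_mx (X0 *m d0) (Y0 *m s0)))
  (ph := sqdet (d0 + s0)) (ps := sqdet (d1 + s1))).
- by rewrite -unitfE -unitmxE.
- by rewrite -unitfE -unitmxE.
- exact: sqdet_unit.
- exact: sqdet_unit.
- exact: sqdet_unit.
- exact: sqdet_unit.
- by apply: (sqdet_unit fPhi); rewrite /row_full (eqP fPhi) addnC.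
- by apply: (sqdet_unit fPsi); rewrite /row_full (eqP fPsi) addnC.
- have Zeq : col_mx (X1 *m d1) X0 *m (d0 + s0) =
      col_mx (X1 *m d1 *m s0) (X0 *m s0 + X0 *m d0).
    by rewrite mul_col_mx !mulmxDr -(mulmxA X1 d1 d0) dd10 mulmx0 add0r addrC.
  rewrite (detfac (P := Y0 *m s0) Zeq) ?sY0 //; last exact: addnC.
  by rewrite (Jdet (X0 *m d0) (Y0 *m s0)) // sqdet_sq.
- have Zeq : col_mx (Y1 *m s1) Y0 *m (d0 + s0) =
      col_mx (Y1 *m s1 *m d0) (Y0 *m d0 + Y0 *m s0).
    by rewrite mul_col_mx !mulmxDr -(mulmxA Y1 s1 s0) ss10 mulmx0 addr0.
  rewrite (detfac (P := X0 *m d0) Zeq) ?sX0 //; try exact: addnC.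
  by rewrite sqdet_sq.
- have Zeq : col_mx (X0 *m d0) X1 *m (d1 + s1) =
      col_mx (X0 *m d0 *m s1) (X1 *m s1 + X1 *m d1).
    by rewrite mul_col_mx !mulmxDr -(mulmxA X0 d0 d1) dd01 mulmx0 add0r addrC.
  rewrite (detfac (P := Y1 *m s1) Zeq) ?sY1 //; try exact: addnC.
  by rewrite sqdet_sq.
- have Zeq : col_mx (Y0 *m s0) Y1 *m (d1 + s1) =
      col_mx (Y0 *m s0 *m d1) (Y1 *m d1 + Y1 *m s1).
    by rewrite mul_col_mx !mulmxDr -(mulmxA Y0 s0 s1) ss01 mulmx0 addr0.
  rewrite (detfac (P := X1 *m d1) Zeq) ?sX1 //; try exact: addnC.
  rewrite (Jdet (Y1 *m s1) (X1 *m d1)) //; last exact: addnC. by congr (_ * _); apply: sqdet_sq.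
- exact: Jmx_sq.
Qed.
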